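(* Let $f:\mathbb{R}^p\to\mathbb{R}\cup\{+\infty\}$ be self-concordant, $\psi:\mathbb{R}^n\to\mathbb{R}\cup\{+\infty\}$ proper, closed, convex, and $D\in\mathbb{R}^{n\times p}$ of full row rank ($n\le p$). Let $\varphi(y):=f^\ast(-D^\top y)$, and let $y^k\in\operatorname{dom}\varphi$ with $\nabla^2\varphi(y^k)=D\nabla^2 f^\ast(-D^\top y^k)D^\top\succ0$. Fix $\xi^0\in\partial\psi^\ast(y^0)$ for some $y^0$, $\tau_{k+1}\in(0,1]$, and set $\nabla\varphi_{\tau_{k+1}}(y^k):=\nabla\varphi(y^k)-(\tfrac{1}{\tau_{k+1}}-1)\xi^0$, $$\mathcal{P}_k(y):=\langle\nabla\varphi_{\tau_{k+1}}(y^k),y-y^k\rangle+\tfrac12\langle\nabla^2\varphi(y^k)(y-y^k),y-y^k\rangle+\tfrac{1}{\tau_{k+1}}\psi^\ast(y),$$ with minimizer $\bar y^{k+1}$, and $H:=\nabla^2\varphi(y^k)^{-1}$, $h:=y^k-\nabla^2\varphi(y^k)^{-1}\nabla\varphi_{\tau_{k+1}}(y^k)$. Let $\delta\ge0$ and let $z^{k+1}\in\mathbb{R}^n$ be a $\delta$-approximate solution of $\min_z\{\tfrac12\langle Hz,z\rangle-\langle h,z\rangle+\tfrac{1}{\tau_{k+1}}\psi(\tau_{k+1}z)\}$ in the sense that there exists $\tilde e_k$ with $\|\tilde e_k\|_{y^k}\le\delta$ and $\tilde e_k\in Hz^{k+1}-h+\partial\psi(\tau_{k+1}z^{k+1})$.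 Define $$y^{k+1}:=y^k-\nabla^2\varphi(y^k)^{-1}\big(\nabla\varphi_{\tau_{k+1}}(y^k)+z^{k+1}\big)+\tilde e_k.$$ Then $\mathcal{P}_k(y^{k+1})-\mathcal{P}_k(\bar y^{k+1})\le\frac{\delta^2}{2}$.
   Context: $f^\ast,\psi^\ast$ denote Fenchel conjugates. Local norm of $\varphi$: $\|u\|_y:=\langle\nabla^2\varphi(y)u,u\rangle^{1/2}$. Self-concordance of $f$: $|\langle\nabla^3 f(x)[u]u,u\rangle|\le2\langle\nabla^2 f(x)u,u\rangle^{3/2}$. *)

(* Defs.v *)
From HB Require Import structures.
From mathcomp Require Import all_boot all_order all_algebra.
From mathcomp Require Import all_classical all_reals all_analysis.
Set Implicit Arguments. Unset Strict Implicit. Unset Printing Implicit Defensive.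
Import Order.TTheory GRing.Theory Num.Theory numFieldNormedType.Exports.
Local Open Scope ring_scope.
Local Open Scope classical_set_scope.

Definition dotv (R : realType) (n : nat) (u v : 'cV[R]_n) : R :=
  (u^T *m v) ord0 ord0.
Definition vnorm (R : realType) (n : nat) (u : 'cV[R]_n) : R :=
  Num.sqrt (dotv u u).
(* local norm ||u||_y := <Q u, u>^{1/2}, Q = Hessian of phi at y *)
Definition locnorm (R : realType) (n : nat) (Q : 'M[R]_n) (u : 'cV[R]_n) : R :=
  Num.sqrt (dotv (Q *m u) u).

Definition fconj (R : realType) (n : nat) (f : 'cV[R]_n -> \bar R)
  (s : 'cV[R]_n) : \bar R :=
  ereal_sup [set ((dotv s x)%:E - f x)%E | x in [set: 'cV[R]_n]].

Definition proper_fun (R : realType) (n : nat) (f : 'cV[R]_n -> \bar R) : Prop :=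
  (forall x, f x != -oo%E) /\ exists x, f x \is a fin_num.

Definition convex_fun (R : realType) (n : nat) (f : 'cV[R]_n -> \bar R) : Prop :=
  forall (x y : 'cV[R]_n) (t : R), 0 <= t <= 1 ->
    (f (t *: x + (1 - t) *: y)%R <= t%:E * f x + (1 - t)%:E * f y)%E.

(* closed = lower semicontinuous *)
Definition lsc_fun (R : realType) (n : nat) (f : 'cV[R]_n -> \bar R) : Prop :=
  forall x (a : R), (a%:E < f x)%E ->
    exists2 d : R, 0 < d & forall z, vnorm (z - x) < d -> (a%:E < f z)%E.

Definition subdiff (R : realType) (n : nat) (f : 'cV[R]_n -> \bar R)
  (x : 'cV[R]_n) : set 'cV[R]_n :=
  [set g | f x \is a fin_num /\
           forall z, (f x + (dotv g (z - x))%:E <= f z)%E].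

Definition grad_at (R : realType) (n : nat) (f : 'cV[R]_n -> \bar R)
  (y g : 'cV[R]_n) : Prop :=
  (exists2 r : R, 0 < r & forall h, vnorm h < r -> f (y + h) \is a fin_num) /\
  forall eps : R, 0 < eps -> exists2 d : R, 0 < d & forall h, vnorm h < d ->
    `| fine (f (y + h)) - fine (f y) - dotv g h | <= eps * vnorm h.

Definition hess_at (R : realType) (n : nat) (f : 'cV[R]_n -> \bar R)
  (y : 'cV[R]_n) (Q : 'M[R]_n) : Prop :=
  exists2 r : R, 0 < r & exists G : 'cV[R]_n -> 'cV[R]_n,
    (forall h, vnorm h < r -> grad_at f (y + h) (G (y + h))) /\
    forall eps : R, 0 < eps -> exists2 d : R, 0 < d & forall h, vnorm h < d ->
      vnorm (G (y + h) - G y - Q *m h) <= eps * vnorm h.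

Definition posdef (R : realType) (n : nat) (Q : 'M[R]_n) : Prop :=
  Q^T = Q /\ forall u : 'cV[R]_n, u != 0 -> 0 < dotv (Q *m u) u.

Definition self_concordant (R : realType) (p : nat) (f : 'cV[R]_p -> \bar R) : Prop :=
  proper_fun f /\ lsc_fun f /\ convex_fun f /\
  (forall x, (f x < +oo)%E ->
     exists2 r : R, 0 < r & forall h, vnorm h < r -> f (x + h) \is a fin_num) /\
  forall x u, (f x < +oo)%E ->
    exists2 r : R, 0 < r & exists g1 g2 g3 : R -> R,
      (forall t : R, `|t| < r ->
         is_derive t 1 (fun s : R => fine (f (x + s *: u))) (g1 t) /\
         is_derive t 1 g1 (g2 t) /\ is_derive t 1 g2 (g3 t) /\
         {for t, continuous g3}) /\
      `| g3 0 | <= 2 * powR (g2 0) (3 / 2).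

(* Main.v *)
Require Import Defs.
From HB Require Import structures.
From mathcomp Require Import all_boot all_order all_algebra.
From mathcomp Require Import all_classical all_reals all_analysis.
From mathcomp Require Import lra.
Import Order.TTheory GRing.Theory Num.Theory numFieldNormedType.Exports.
Local Open Scope ring_scope.
Local Open Scope classical_set_scope.

Local Set Implicit Arguments.
Section H.
Variables (R : realType) (n : nat).
Implicit Types (u v w : 'cV[R]_n) (A : 'M[R]_n).

Lemma dotvDl u v w : dotv (u + v) w = dotv u w + dotv v w.
Proof. by rewrite /dotv linearD /= mulmxDl mxE. Qed.
Lemma dotvZl (a : R) u w : dotv (a *: u) w = a * dotv u w.
Proof. by rewrite /dotv linearZ /= -scalemxAl mxE. Qed.
Lemma dotvNl u w : dotv (- u) w = - dotv u w.
Proof. by rewrite -scaleN1r dotvZl mulN1r. Qed.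
Lemma dotvBl u v w : dotv (u - v) w = dotv u w - dotv v w.
Proof. by rewrite dotvDl dotvNl. Qed.
Lemma dotvC u v : dotv u v = dotv v u.
Proof. rewrite /dotv; have -> : v^T *m u = (u^T *m v)^T by rewrite trmx_mul trmxK.
by rewrite [RHS]mxE. Qed.
Lemma dotvDr u v w : dotv w (u + v) = dotv w u + dotv w v.
Proof. by rewrite dotvC dotvDl !(dotvC w). Qed.
Lemma dotvZr (a : R) u w : dotv w (a *: u) = a * dotv w u.
Proof. by rewrite dotvC dotvZl dotvC. Qed.
Lemma dotvBr u v w : dotv w (u - v) = dotv w u - dotv w v.
Proof. by rewrite dotvC dotvBl !(dotvC w). Qed.
Lemma dotv_mul A u v : dotv (A *m u) v = dotv u (A^T *m v).
Proof. by rewrite /dotv trmx_mul mulmxA. Qed.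

Lemma posdef_unit A : posdef A -> A \in unitmx.
Proof.
case=> AT Ap; rewrite unitmxE unitfE; apply/negP => /det0P [v v0 vA].
have : v^T != 0 by apply: contra v0 => /eqP h; rewrite -(trmxK v) h linear0.
move=> /Ap; have -> : A *m v^T = 0 by rewrite -AT -trmx_mul vA linear0.
by rewrite /dotv trmx0 mul0mx mxE ltxx.
Qed.

Lemma posdef_ge0 A u : posdef A -> 0 <= dotv (A *m u) u.
Proof.
case=> _ Ap; have [->|/Ap/ltW//] := eqVneq u 0.
by rewrite mulmx0 /dotv trmx0 mul0mx mxE.
Qed.
Lemma dotvNr u w : dotv w (- u) = - dotv w u.
Proof. by rewrite dotvC dotvNl dotvC. Qed.
Lemma qexp A u v w : dotv (A *m (u - v + w)) (u - v + w) =
  dotv (A*m u) u - dotv (A*m u) v + dotv (A*m u) w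
  - (dotv (A*m v) u - dotv (A*m v) v + dotv (A*m v) w)
  + (dotv (A*m w) u - dotv (A*m w) v + dotv (A*m w) w).
Proof. by rewrite !mulmxDr !mulmxN !dotvDl !dotvNl !dotvDr !dotvNr. Qed.
End H.
Lemma zm1 (V : zmodType) (y a b s : V) : y - (a + b) + (b - (y - a) + s) = s.
Proof. by rewrite opprD opprB !addrA subrK subrK subrr add0r. Qed.
Lemma zm2 (V : zmodType) (y X e : V) : y - X + e - y = e - X.
Proof. by rewrite [LHS]addrC !addrA addNr add0r addrC. Qed.
Local Unset Implicit Arguments.

Theorem lemma6p1 (R : realType) (n p : nat)
  (f : 'cV[R]_p -> \bar R) (psi : 'cV[R]_n -> \bar R) (D : 'M[R]_(n, p))
  (yk y0 xi0 g ybar z e : 'cV[R]_n) (Q : 'M[R]_n) (tau delta : R) :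
  self_concordant f ->
  proper_fun psi -> lsc_fun psi -> convex_fun psi ->
  (n <= p)%N -> \rank D = n ->
  let phi := fun y : 'cV[R]_n => fconj f (- (D^T *m y)) in
  (phi yk < +oo)%E ->
  grad_at phi yk g -> hess_at phi yk Q ->
  (exists M : 'M[R]_p, hess_at (fconj f) (- (D^T *m yk)) M /\ Q = D *m M *m D^T) ->
  posdef Q ->
  subdiff (fconj psi) y0 xi0 ->
  0 < tau <= 1 ->
  let gt := g - (tau^-1 - 1) *: xi0 in
  let P := fun y : 'cV[R]_n =>
    ((dotv gt (y - yk) + 2^-1 * dotv (Q *m (y - yk)) (y - yk))%:E
     + (tau^-1)%:E * fconj psi y)%E in
  (forall y, (P ybar <= P y)%E) ->
  let H := invmx Q in
  let h := yk - invmx Q *m gt in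
  0 <= delta ->
  locnorm Q e <= delta ->
  (exists s, subdiff psi (tau *: z) s /\ e = H *m z - h + s) ->
  let y1 := yk - invmx Q *m (gt + z) + e in
  (P y1 - P ybar <= (delta ^+ 2 / 2)%:E)%E.
Proof.
move=> _ _ _ _ _ _ phi _ _ _ _ pdQ _ /andP[tau0 _] gt P _ H h d0 nre [s [[psifin sub] ee]].
change (P (yk - invmx Q *m (gt + z) + e)%R - P ybar <= (delta ^+ 2 / 2)%:E)%E.
set y1 := yk - invmx Q *m (gt + z) + e.
have Qu := posdef_unit pdQ.
have y1s : y1 = s.
  by rewrite /y1 ee /H /h mulmxDr zm1.
have Qd : Q *m (s - yk) = Q *m e - gt - z.
  have -> : s - yk = e - invmx Q *m (gt + z).
    by rewrite -y1s /y1 zm2.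
  by rewrite mulmxBr mulmxA mulmxV // mul1mx opprD addrA.
set c := fine (psi (tau *: z)).
have lb : forall y, ((dotv y (tau *: z) - c)%:E <= fconj psi y)%E.
  move=> y; rewrite /fconj; apply: ereal_sup_ubound; exists (tau *: z) => //.
  by rewrite -(fineK psifin) -EFinB.
have ub : (fconj psi s <= (dotv s (tau *: z) - c)%:E)%E.
  apply: ge_ereal_sup => _ [w _ <-].
  move: (sub w); case E: (psi w) => [r| |].
  - rewrite -(fineK psifin) -EFinD lee_fin -/c => hr.
    rewrite -EFinB lee_fin; rewrite dotvBr in hr; lra.
  - by move=> _; rewrite /= leNye.
  - by rewrite -(fineK psifin) -EFinD leeNy_eq.
have Fs : fconj psi s = (dotv s (tau *: z) - c)%:E.
  by apply/eqP; rewrite eq_le ub lb.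
have t'0 : 0 < tau^-1 by rewrite invr_gt0.
have hbnd : forall b, dotv ybar (tau *: z) - c <= b ->
   dotv z ybar - tau^-1 * c <= tau^-1 * b.
  move=> b hb; have := hb; rewrite -(ler_pM2l t'0) mulrBr dotvZr mulrA mulVf ?gt_eqF //.
  by rewrite mul1r dotvC.
have ha : tau^-1 * (dotv s (tau *: z) - c) = dotv z s - tau^-1 * c.
  by rewrite mulrBr dotvZr mulrA mulVf ?gt_eqF // mul1r dotvC.
rewrite y1s /P Fs.
case E: (fconj psi ybar) => [b| |].
- have hb := lb ybar; rewrite E lee_fin in hb.
  have hb' := hbnd b hb.
  rewrite -!EFinM -!EFinD lee_fin ha.
  set v := ybar - yk; set dd := s - yk.
  have QT : Q^T = Q by case: pdQ.
  have sym : forall x y, dotv (Q *m x) y = dotv (Q *m y) x.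
    by move=> x y; rewrite dotv_mul QT dotvC.
  have F1 : forall x, dotv (Q *m dd) x = dotv (Q *m e) x - dotv gt x - dotv z x.
    by move=> x; rewrite Qd !dotvBl.
  have F2 : dotv z ybar - dotv z s = dotv z v - dotv z dd.
    by rewrite -!dotvBr /v /dd opprB addrA subrK.
  have F3 := posdef_ge0 (v - dd + e) pdQ.
  rewrite qexp in F3.
  have F4 : dotv (Q *m e) e <= delta ^+ 2.
    have e0 := posdef_ge0 e pdQ.
    move: nre; rewrite /locnorm => nre.
    have sq := sqr_sqrtr e0.
    have s0 := sqrtr_ge0 (dotv (Q *m e) e).
    set r := Num.sqrt _ in nre sq s0.
    rewrite -sq expr2; nra.
  have := F1 v; have := F1 dd; have := sym v dd; have := sym v e; have := sym dd e.
  clear y1s Qd ee sym F1 lb ub Fs hbnd sub E ha Qu psifin.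
  lra.
- by rewrite gt0_muley ?lte_fin // addey // leNye.
- by have := lb ybar; rewrite E leeNy_eq.
Qed.
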